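(* Let $T\in V$ be a target variable. If $\zeta_T=n$ (i.e. $T\in\Upsilon_i$ for all $i$) and the family $\{\Upsilon_1\setminus\{T\},\dots,\Upsilon_n\setminus\{T\}\}$ is conservative, then $\bigcup_{i=1}^{n}MB_i(T)=ch(T)\cup sp(T)$.
   Context: Let $G=(V,E)$ be a DAG (causal Bayesian network) over a finite set $V$ of random variables with joint distribution $P$ satisfying the Markov condition with respect to $G$; causal sufficiency is assumed. For $X\in V$, $pa(X)$ and $ch(X)$ are the parents and children of $X$ in $G$, $sp(X)=\big(\bigcup_{Y\in ch(X)}pa(Y)\big)\setminus\{X\}$ is the set of spouses, and $MB(X)=pa(X)\cup ch(X)\cup sp(X)$ is the Markov blanket. There are $n\ge 1$ intervention experiments; in the $i$-th, the set $\Upsilon_i\subseteq V$ is manipulated. The post-intervention DAG is $G_i=(V,E_i)$ with $E_i=\{(a,b)\in E: b\notin\Upsilon_i\}$, with distribution $P_i(V)=\prod_{V_j\notin\Upsilon_i}P(V_j\mid pa(V_j))\prod_{V_j\in\Upsilon_i}P_i(V_j)$, and $D_i$ is a dataset drawn from $P_i$. It is assumed that each $P_i$ is faithful to $G_i$ and that conditional independence tests on $D_i$ are reliable (return exactly the conditional independences of $P_i$). $MB_i(T)$ denotes the Markov blanket of $T$ found in $D_i$, i.e. the set of parents, children and spouses of $T$ in $G_i$. $\zeta_T=|\{i:T\in\Upsilon_i\}|$. A family $\{A_1,\dots,A_n\}$ of subsets of $V$ is called conservative if for every $V_j\in\bigcup_{i=1}^n A_i$ there exists $i$ with $V_j\notin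 A_i$. *)

(* Defs.v *)
From mathcomp Require Import all_boot.
Set Implicit Arguments. Unset Strict Implicit. Unset Printing Implicit Defensive.

(* A directed graph on a finite vertex set V is an edge relation E : rel V,
   with E a b meaning there is an edge a -> b. *)
Section Graphs.
Variable V : finType.

Definition dag (E : rel V) : Prop := forall a b, E a b -> ~~ connect E b a.

Definition pa (E : rel V) (X : V) : {set V} := [set Y | E Y X].
Definition ch (E : rel V) (X : V) : {set V} := [set Y | E X Y].
Definition sp (E : rel V) (X : V) : {set V} :=
  (\bigcup_(Y in ch E X) pa E Y) :\ X.
Definition MB (E : rel V) (X : V) : {set V} := pa E X :|: ch E X :|: sp E X.

(* post-intervention graph: remove all edges into manipulated variables *)
Definition intervene (E : rel V) (U : {set V}) : rel V :=
  fun a b => E a b && (b \notin U).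

Definition zeta (n : nat) (Ups : 'I_n -> {set V}) (T : V) : nat :=
  #|[set i | T \in Ups i]|.

Definition conservative (n : nat) (A : 'I_n -> {set V}) : Prop :=
  forall v, v \in \bigcup_(i < n) A i -> exists i, v \notin A i.
End Graphs.

(* MB_i(T): Markov blanket of T found in D_i, i.e. in the graph G_i *)
Definition MB_i (V : finType) (E : rel V) (n : nat) (Ups : 'I_n -> {set V})
  (i : 'I_n) (T : V) : {set V} := MB (intervene E (Ups i)) T.

(* Main.v *)
Require Import Defs.
From mathcomp Require Import all_boot.

Theorem theorem8 (V : finType) (E : rel V) (hdag : dag E)
  (n : nat) (hn : 0 < n) (Ups : 'I_n -> {set V}) (T : V)
  (hzeta : zeta Ups T = n)
  (hcons : conservative (fun i => Ups i :\ T)) :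
  \bigcup_(i < n) MB_i E Ups i T = ch E T :|: sp E T.
Proof.
have hall : forall i, T \in Ups i.
  have H : [set i | T \in Ups i] = setT.
    apply/eqP; rewrite eqEcard subsetT cardsT card_ord.
    by move: hzeta; rewrite /zeta => ->; rewrite /= leqnn.
  by move=> i; have := in_setT i; rewrite -H inE.
have hch : forall Y, E T Y -> exists i : 'I_n, Y \notin Ups i.
  move=> Y hTY.
  have hYT : Y != T.
    apply/eqP => eYT; subst Y.
    by have := hdag _ _ hTY; rewrite connect0.
  case: (boolP (Y \in \bigcup_(i < n) (Ups i :\ T))) => hY.
    have [i hi] := hcons Y hY.
    by exists i; move: hi; rewrite !inE hYT.
  exists (Ordinal hn); apply/negP => hin; move/negP: hY; apply.
  by apply/bigcupP; exists (Ordinal hn) => //; rewrite !inE hYT.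
apply/setP => Z; apply/idP/idP.
- case/bigcupP => i _.
  rewrite /MB_i /MB /pa /ch /sp /intervene !inE (hall i) /= andbF /=.
  case/orP.
    by case/andP => -> _.
  case/andP => hZT /bigcupP [Y]; rewrite !inE => /andP [hTY hY] /andP [hZY _].
  apply/orP; right; rewrite hZT /=; apply/bigcupP; exists Y; by rewrite inE.
- rewrite !inE; case/orP.
    move=> hTZ; have [i hi] := hch Z hTZ.
    apply/bigcupP; exists i => //.
    rewrite /MB_i /MB /pa /ch /sp /intervene !inE hTZ hi; apply/orP; left; apply/orP; right; reflexivity.
  case/andP => hZT /bigcupP [Y]; rewrite !inE => hTY hZY.
  have [i hi] := hch Y hTY.
  apply/bigcupP; exists i => //.
  rewrite /MB_i /MB /pa /ch /sp /intervene !inE hZT /=.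
  apply/orP; right; apply/bigcupP; exists Y; by rewrite !inE ?hTY ?hZY ?hi.
Qed.
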